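(* Let $n_1,\dots,n_N\ge1$, $n=\sum_{i=1}^Nn_i$, and $\epsilon_i>0$ for $i=1,\dots,N$. Let $p_c:\mathbb R^n\to\mathbb R$ be the density of the uniform distribution on $\prod_{i=1}^NC_{n_i}(0,\epsilon_i)$, i.e. $p_c(z)=\frac{1}{2^n\prod_{i=1}^N\epsilon_i^{n_i}}$ for $z\in\prod_{i=1}^NC_{n_i}(0,\epsilon_i)$ and $p_c(z)=0$ otherwise. Then for all $x,y\in\mathbb R^n$, $$\int_{\mathbb R^n}|p_c(u-x)-p_c(u-y)|\,du\le\frac{\sqrt n}{\min_{1\le i\le N}\epsilon_i}\|x-y\|.$$
   Context: $C_m(x,\rho)=\{y\in\mathbb R^m:\|y-x\|_\infty\le\rho\}$ is the cube centered at $x$ with edge length $2\rho$ and edges along the coordinate axes; $\|\cdot\|$ is the Euclidean norm. *)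

(* Defs.v *)
From HB Require Import structures.
From mathcomp Require Import all_boot all_order all_algebra.
From mathcomp Require Import all_classical all_reals all_analysis.
Set Implicit Arguments. Unset Strict Implicit. Unset Printing Implicit Defensive.
Import Order.TTheory GRing.Theory Num.Theory.
Local Open Scope ring_scope.

Definition dimn (N : nat) (nn : 'I_N -> nat) : nat := (\sum_(i < N) nn i)%N.

(* coordinate j (0-based) of R^n belongs to the i-th block (contiguous blocks
   of sizes nn 0, nn 1, ...) *)
Definition inblk (N : nat) (nn : 'I_N -> nat) (i : 'I_N) (j : 'I_(dimn nn)) : bool :=
  ((\sum_(k < N | (k < i)%N) nn k <= j)%N && (j < \sum_(k < N | (k <= i)%N) nn k)%N).

Definition eucl (R : realType) (n : nat) (x : 'rV[R]_n) : R :=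
  Num.sqrt (\sum_(j < n) (x ord0 j) ^+ 2).

Definition pc (R : realType) (N : nat) (nn : 'I_N -> nat) (eps : 'I_N -> R)
  (z : 'rV[R]_(dimn nn)) : R :=
  if [forall i, forall j, @inblk N nn i j ==> (`|z ord0 j| <= eps i)]
  then (2 ^+ dimn nn * \prod_(i < N) eps i ^+ nn i)^-1
  else 0.

(* Lebesgue integral over R^n of a nonnegative function, as the iterated
   one-dimensional Lebesgue integral (equal to the n-dimensional Lebesgue
   integral for nonnegative measurable integrands by Tonelli). *)
Definition vcons (R : realType) (n : nat) (t : R) (v : 'rV[R]_n) : 'rV[R]_n.+1 :=
  \row_(j < n.+1) (if unlift ord0 j is Some k then v ord0 k else t).

Fixpoint iint (R : realType) (n : nat) : ('rV[R]_n -> \bar R) -> \bar R :=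
  match n with
  | 0 => fun f => f 0
  | n'.+1 => fun f =>
      (\int[@lebesgue_measure R]_t iint (fun v : 'rV[R]_n' => f (vcons t v)))%E
  end.

Definition min_eps (R : realType) (N' : nat) (eps : 'I_N'.+1 -> R) : R :=
  \big[Order.min/eps ord0]_(i < N'.+1) eps i.

(* Main.v *)
Require Import Defs.
From HB Require Import structures.
From mathcomp Require Import all_boot all_order all_algebra.
From mathcomp Require Import all_classical all_reals all_analysis.
From mathcomp Require Import measurable_realfun.
From mathcomp Require Import ring lra zify.
Import Order.TTheory GRing.Theory Num.Theory.
Set Implicit Arguments. Unset Strict Implicit. Unset Printing Implicit Defensive.
Local Open Scope ring_scope.

Section S.
Variable R : realType.

Definition ind (c r t : R) : R := ((`|t - c| <= r)%R : bool)%:R.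

Lemma indE c r : ind c r = (\1_([set` (`[c - r, c + r] : interval R)]) : R -> R).
Proof.
apply/funext => t; rewrite indicE /ind; congr (_%:R).
rewrite mem_setE in_itv /= ler_norml.
congr nat_of_bool; by apply/andP/andP => -[h1 h2]; split; lra.
Qed.

Lemma measurable_ind c r : measurable_fun setT (ind c r).
Proof. by rewrite indE; apply: measurable_indic. Qed.

Lemma ind_ge0 c r t : 0 <= ind c r t.
Proof. by rewrite /ind ler0n. Qed.

Lemma int_indR c r : 0 <= r ->
  (\int[@lebesgue_measure R]_t (ind c r t)%:E = (2 * r)%:E)%E.
Proof.
move=> r0; rewrite indE integral_indic //= setIT lebesgue_measure_itv /=.
rewrite lte_fin; case: ifPn => h.
  by rewrite -EFinB; congr (_%:E); ring.
by congr (_%:E); lra.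
Qed.
Lemma ind_cases c r t : (ind c r t = 1 /\ c - r <= t /\ t <= c + r) \/
  (ind c r t = 0 /\ (t < c - r \/ c + r < t)).
Proof.
rewrite /ind; case: (lerP `|t - c| r) => h.
  left; split => //; move: h; rewrite ler_norml => /andP[h1 h2]; split; lra.
right; split => //; move: h; rewrite ltr_normr => /orP[h|h]; [right|left]; lra.
Qed.

Lemma key (a b e t d : R) : 0 < e -> d = `|a - b| ->
  ind a e t * (1 - ind b e t) + (1 - ind a e t) * ind b e t <=
  ind ((a + b) / 2 - e) (d / 2) t + ind ((a + b) / 2 + e) (d / 2) t.
Proof.
move=> e0 hd.
have hd2 : d = b - a \/ d = a - b.
  have [hab|hab] := lerP a b.
    by left; rewrite hd ler0_norm ?opprB //; lra.
  by right; rewrite hd gtr0_norm //; lra.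
have hab : (a <= b /\ d = b - a) \/ (b <= a /\ d = a - b).
  have [hab|hab] := lerP a b.
    by left; split => //; rewrite hd ler0_norm ?opprB //; lra.
  by right; split; [lra|]; rewrite hd gtr0_norm //; lra.
clear hd hd2.
case: (ind_cases a e t) => -[-> h1]; case: (ind_cases b e t) => -[-> h2];
case: (ind_cases ((a + b) / 2 - e) (d / 2) t) => -[-> h3];
case: (ind_cases ((a + b) / 2 + e) (d / 2) t) => -[-> h4]; lra.
Qed.

Definition Ind n (e : 'I_n -> R) (a u : 'rV[R]_n) : R :=
  \prod_(j < n) ind (a ord0 j) (e j) (u ord0 j).
Definition rtail n (a : 'rV[R]_n.+1) : 'rV[R]_n := \row_k a ord0 (lift ord0 k).

Lemma vcons0 n (t : R) (v : 'rV[R]_n) : vcons t v ord0 ord0 = t.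
Proof. by rewrite /vcons mxE unlift_none. Qed.

Lemma vconsS n (t : R) (v : 'rV[R]_n) k : vcons t v ord0 (lift ord0 k) = v ord0 k.
Proof. by rewrite /vcons mxE liftK. Qed.

Lemma Ind_vcons n (e : 'I_n.+1 -> R) a t v :
  Ind e a (vcons t v) = ind (a ord0 ord0) (e ord0) t *
    Ind (fun k => e (lift ord0 k)) (rtail a) v.
Proof.
rewrite /Ind big_ord_recl vcons0; congr (_ * _); apply: eq_bigr => k _.
by rewrite vconsS /rtail mxE.
Qed.

Lemma Ind_ge0 n e (a u : 'rV[R]_n) : 0 <= Ind e a u.
Proof. by apply: prodr_ge0 => j _; apply: ind_ge0. Qed.

Lemma iint_ge0 n (f : 'rV[R]_n -> \bar R) : (forall u, (0 <= f u)%E) -> (0 <= iint f)%E.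
Proof.
elim: n f => [|n IH] f f0 /=; first exact: f0.
by apply: integral_ge0 => t _; apply: IH.
Qed.

Lemma iint0 n : iint (fun _ : 'rV[R]_n => 0%E) = 0%E.
Proof.
elim: n => [|n IH] //=.
by rewrite IH integral0.
Qed.
End S.

Section S2.
Variable R : realType.

Lemma L0 n (c : R) (e : 'I_n -> R) (a : 'rV[R]_n) : 0 <= c -> (forall j, 0 <= e j) ->
  iint (fun u => (c * Ind e a u)%:E) = (c * \prod_(j < n) (2 * e j))%:E.
Proof.
elim: n c e a => [|n IH] c e a c0 e0.
  by rewrite /= /Ind !big_ord0.
cbn [iint].
have -> : (fun t => iint (fun v => (c * Ind e a (vcons t v))%:E)) =
   (fun t => ((c * \prod_(j < n) (2 * e (lift ord0 j)))%:E *
      (ind (a ord0 ord0) (e ord0) t)%:E)%E).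
  apply/funext => t.
  rewrite (_ : (fun v => _) = (fun v => ((c * ind (a ord0 ord0) (e ord0) t) *
       Ind (fun k => e (lift ord0 k)) (rtail a) v)%:E)); last first.
    by apply/funext => v; rewrite Ind_vcons mulrA.
  rewrite IH //; last by rewrite mulr_ge0 // ind_ge0.
  by rewrite -EFinM; congr (_%:E); ring.
rewrite ge0_integralZl_EFin //.
- rewrite int_indR // -EFinM big_ord_recl; congr (_%:E); ring.
- by move=> t _; rewrite lee_fin ind_ge0.
- by apply/measurable_EFinP; apply: measurable_ind.
- by rewrite mulr_ge0 // prodr_ge0 // => j _; rewrite mulr_ge0.
Qed.

Lemma int3 (k1 k2 k3 c1 c2 c3 r1 r2 r3 : R) : 0 <= k1 -> 0 <= k2 -> 0 <= k3 ->
  0 <= r1 -> 0 <= r2 -> 0 <= r3 ->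
  (\int[@lebesgue_measure R]_t (k1 * ind c1 r1 t + k2 * ind c2 r2 t + k3 * ind c3 r3 t)%:E
   = (k1 * (2 * r1) + k2 * (2 * r2) + k3 * (2 * r3))%:E)%E.
Proof.
move=> k10 k20 k30 r10 r20 r30.
have mi : forall k c r : R, measurable_fun setT (fun t => k * ind c r t).
  by move=> k c r; apply: measurable_funM; [apply: measurable_cst|apply: measurable_ind].
have gi : forall k c r : R, 0 <= k -> forall t, 0 <= k * ind c r t.
  by move=> k c r k0 t; rewrite mulr_ge0 // ind_ge0.
rewrite (_ : (fun t => _) = (fun t => (k1 * ind c1 r1 t + k2 * ind c2 r2 t)%:E +
   (k3 * ind c3 r3 t)%:E)%E); last by apply/funext => t; rewrite EFinD.
rewrite ge0_integralD //; first last.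
- by apply/measurable_EFinP; apply: mi.
- by move=> t _; rewrite lee_fin gi.
- by apply/measurable_EFinP; apply: measurable_funD; apply: mi.
- by move=> t _; rewrite lee_fin addr_ge0 // gi.
rewrite (_ : (fun t => _) = (fun t => (k1 * ind c1 r1 t)%:E +
   (k2 * ind c2 r2 t)%:E)%E); last by apply/funext => t; rewrite EFinD.
rewrite ge0_integralD //; first last.
- by apply/measurable_EFinP; apply: mi.
- by move=> t _; rewrite lee_fin gi.
- by apply/measurable_EFinP; apply: mi.
- by move=> t _; rewrite lee_fin gi.
have one : forall k c r : R, 0 <= k -> 0 <= r ->
    (\int[@lebesgue_measure R]_t (k * ind c r t)%:E = (k * (2 * r))%:E)%E.
  move=> k c r k0 r0.
  rewrite (_ : (fun t => _) = (fun t => k%:E * (ind c r t)%:E)%E); last first.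
    by apply/funext => t; rewrite EFinM.
  rewrite ge0_integralZl_EFin //.
  - by rewrite int_indR // -EFinM.
  - by move=> t _; rewrite lee_fin ind_ge0.
  - by apply/measurable_EFinP; apply: measurable_ind.
by rewrite !one // -!EFinD.
Qed.


Lemma L1 n (c : R) (e : 'I_n -> R) (a b : 'rV[R]_n) : 0 <= c -> (forall j, 0 < e j) ->
  (iint (fun u => (c * `|Ind e a u - Ind e b u|)%:E) <=
   (c * \prod_(j < n) (2 * e j) * \sum_(j < n) `|a ord0 j - b ord0 j| / e j)%:E)%E.
Proof.
elim: n c e a b => [|n IH] c e a b c0 e0.
  by rewrite /= /Ind !big_ord0 subrr normr0 !mulr0.
cbn [iint].
set e' : 'I_n -> R := fun k => e (lift ord0 k).
set V := c * \prod_(j < n) (2 * e' j).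
set Sig := \sum_(i < n) `|a ord0 (lift ord0 i) - b ord0 (lift ord0 i)| / e (lift ord0 i).
set S := V * Sig.
set J := iint (fun v : 'rV[R]_n => (c * `|Ind e' (rtail a) v - Ind e' (rtail b) v|)%:E).
have J0 : (0 <= J)%E by apply: iint_ge0 => v; rewrite lee_fin mulr_ge0.
have JS : (J <= S%:E)%E.
  apply: le_trans (IH _ _ _ _ c0 (fun k => e0 _)) _.
  rewrite /S /V /Sig lee_fin le_eqVlt; apply/orP; left; apply/eqP; congr (_ * _); apply: eq_bigr => i _.
  by rewrite !mxE.
have [j Jfin] : exists j, J = j%:E.
  by exists (fine J); rewrite fineK // ge0_fin_numE // (le_lt_trans JS) // ltry.
have j0 : 0 <= j by rewrite -lee_fin -Jfin.
have jS : j <= S by rewrite -lee_fin -Jfin.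
have V0 : 0 <= V.
  apply: mulr_ge0 => //; apply: prodr_ge0 => k _; apply: mulr_ge0 => //; apply: ltW; apply: e0.
have Sig0 : 0 <= Sig.
  by rewrite sumr_ge0 // => i _; rewrite divr_ge0 // ltW.
have S0 : 0 <= S by rewrite mulr_ge0.
set A := ind (a ord0 ord0) (e ord0).
set B := ind (b ord0 ord0) (e ord0).
have inner : forall t, iint (fun v => (c * `|Ind e a (vcons t v) - Ind e b (vcons t v)|)%:E) =
   (A t * B t * j + (A t * (1 - B t) + (1 - A t) * B t) * V)%:E.
  move=> t.
  have -> : (fun v => (c * `|Ind e a (vcons t v) - Ind e b (vcons t v)|)%:E) =
    (fun v => (c * `|A t * Ind e' (rtail a) v - B t * Ind e' (rtail b) v|)%:E).
    by apply/funext => v; rewrite !Ind_vcons.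
  rewrite /A /B /ind; case: (_ <= _); case: (_ <= _); rewrite /= ?mulr1n ?mulr0n.
  - transitivity J; last by rewrite Jfin; congr (_%:E); ring.
    by congr (iint _); apply/funext => v; rewrite !mul1r.
  - rewrite (_ : (fun v => _) = (fun v => (c * Ind e' (rtail a) v)%:E)); last first.
      by apply/funext => v; rewrite mul1r mul0r subr0 ger0_norm // Ind_ge0.
    rewrite L0 //; [congr (_%:E); rewrite /V; ring | move=> k; apply: ltW; apply: e0].
  - rewrite (_ : (fun v => _) = (fun v => (c * Ind e' (rtail b) v)%:E)); last first.
      by apply/funext => v; rewrite mul1r mul0r sub0r normrN ger0_norm // Ind_ge0.
    rewrite L0 //; [congr (_%:E); rewrite /V; ring | move=> k; apply: ltW; apply: e0].
  - rewrite (_ : (fun v => _) = (fun v => 0%E)); last first.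
      by apply/funext => v; rewrite !mul0r subrr normr0 mulr0.
    by rewrite iint0; congr (_%:E); ring.
rewrite (_ : (fun t => _) = (fun t => (A t * B t * j + (A t * (1 - B t) + (1 - A t) * B t) * V)%:E)); last first.
  by apply/funext => t; apply: inner.
set d := `|a ord0 ord0 - b ord0 ord0|.
set m := (a ord0 ord0 + b ord0 ord0) / 2.
have d0 : 0 <= d by apply: normr_ge0.
have e00 : 0 < e ord0 := e0 ord0.
apply: (@le_trans _ _ (\int[@lebesgue_measure R]_t
   (S * A t + V * ind (m - e ord0) (d / 2) t + V * ind (m + e ord0) (d / 2) t)%:E)%E).
  apply: ge0_le_integral => //.
  - move=> t _; rewrite lee_fin.
    case: (ind_cases (a ord0 ord0) (e ord0) t) => -[h _];
    case: (ind_cases (b ord0 ord0) (e ord0) t) => -[h' _]; rewrite /A /B h h'; lra.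
  - apply/measurable_EFinP.
    by repeat (apply: measurable_ind || apply: measurable_cst || apply: measurable_funD
      || apply: measurable_funM || apply: measurable_funN).
  - apply/measurable_EFinP.
    by repeat (apply: measurable_ind || apply: measurable_cst || apply: measurable_funD
      || apply: measurable_funM).
  - move=> t _; rewrite lee_fin.
    have k := key t e00 (erefl d).
    have h1 : A t * B t * j <= S * A t.
      case: (ind_cases (a ord0 ord0) (e ord0) t) => -[h _];
      case: (ind_cases (b ord0 ord0) (e ord0) t) => -[h' _]; rewrite /A /B h h'; lra.
    have h2 : (A t * (1 - B t) + (1 - A t) * B t) * V <=
        V * ind (m - e ord0) (d / 2) t + V * ind (m + e ord0) (d / 2) t.
      by rewrite -mulrDr mulrC; apply: ler_wpM2l.
    lra.
have e00w : 0 <= e ord0 by apply: ltW.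
rewrite int3 // ?divr_ge0 // lee_fin.
rewrite big_ord_recl [X in _ <= _ * X]big_ord_recl -/d.
rewrite le_eqVlt; apply/orP; left; apply/eqP.
rewrite /S /V /Sig /e'. field.
by rewrite gt_eqF.
Qed.

End S2.

Section Blocks.
Variable N' : nat.
Variable nn : 'I_N'.+1 -> nat.

Definition sb (m : nat) : nat := (\sum_(k < N'.+1 | (k < m)%N) nn k)%N.

Lemma sb0 : sb 0 = 0%N.
Proof. by rewrite /sb big_pred0 // => k; rewrite ltn0. Qed.

Lemma sbS m (hm : (m < N'.+1)%N) : sb m.+1 = (sb m + nn (Ordinal hm))%N.
Proof.
rewrite /sb (bigD1 (Ordinal hm)) //= addnC; congr addn.
apply: eq_bigl => k; rewrite ltnS -(inj_eq val_inj) /= [(k < m)%N]ltn_neqAle.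
by rewrite andbC.
Qed.

Lemma sbN : sb N'.+1 = dimn nn.
Proof. by rewrite /sb /dimn; apply: eq_bigl => k; rewrite ltn_ord. Qed.

Lemma sb_mono m m' : (m <= m')%N -> (sb m <= sb m')%N.
Proof.
move=> hm; rewrite /sb big_mkcond [X in (_ <= X)%N]big_mkcond /=.
apply: leq_sum => k _.
by case: (ltnP k m) => h; case: (ltnP k m') => h' //; lia.
Qed.

Lemma sb_exists j : (j < dimn nn)%N -> exists i : 'I_N'.+1, (sb i <= j < sb i.+1)%N.
Proof.
rewrite -sbN.
suff : forall m, (m <= N'.+1)%N -> (j < sb m)%N -> exists i : 'I_N'.+1, (sb i <= j < sb i.+1)%N.
  by apply.
elim => [|m IH] hm hj; first by rewrite sb0 in hj.
case: (ltnP j (sb m)) => h; first by apply: IH => //; lia.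
by exists (Ordinal hm); rewrite h.
Qed.

Lemma sb_uniq j (i i' : nat) : (sb i <= j < sb i.+1)%N -> (sb i' <= j < sb i'.+1)%N -> i = i'.
Proof.
move=> /andP[h1 h2] /andP[h3 h4].
case: (ltngtP i i') => // h.
  have := sb_mono h; lia.
have := sb_mono h; lia.
Qed.

Definition blkn (j : nat) : 'I_N'.+1 :=
  odflt ord0 [pick i : 'I_N'.+1 | (sb i <= j)%N && (j < sb i.+1)%N].

Lemma blknP j : (j < dimn nn)%N -> (sb (blkn j) <= j < sb (blkn j).+1)%N.
Proof.
move=> hj; rewrite /blkn; case: pickP => [i hi|h] //=.
by have [i hi] := sb_exists hj; rewrite h in hi.
Qed.

Lemma blkn_uniq j (i : 'I_N'.+1) : (sb i <= j < sb i.+1)%N -> blkn j = i.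
Proof.
move=> hi; apply: val_inj; apply: (@sb_uniq j) => //; apply: blknP.
rewrite -sbN; move/andP: hi => [_ h]; apply: leq_trans h _; apply: sb_mono.
exact: ltn_ord.
Qed.

Lemma inblkE (i : 'I_N'.+1) (j : 'I_(dimn nn)) : inblk i j = (sb i <= j < sb i.+1)%N.
Proof.
rewrite /inblk /sb; congr (_ && (_ < _)%N); apply: eq_bigl => k.
Qed.

Variable R : realType.
Variable eps : 'I_N'.+1 -> R.

Lemma prod_blk m : (m <= N'.+1)%N ->
  \prod_(0 <= j < sb m) eps (blkn j) = \prod_(k < N'.+1 | (k < m)%N) eps k ^+ nn k.
Proof.
elim: m => [|m IH] hm.
  by rewrite sb0 big_geq // big_pred0 // => k; rewrite ltn0.
rewrite (sbS hm) (@big_cat_nat _ _ _ (sb m)); [|by []|by apply: leq_addr].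
rewrite [X in X * _ = _]IH; last exact: ltnW.
rewrite (@eq_big_nat _ _ _ _ _ _ (fun _ => eps (Ordinal hm))); last first.
  move=> i hi; congr eps; apply: blkn_uniq => /=.
  by rewrite (sbS hm).
rewrite prodr_const_nat addKn.
rewrite [RHS](bigD1 (Ordinal hm)) //= mulrC; congr (_ * _).
apply: eq_bigl => k; rewrite ltnS -(inj_eq val_inj) /= [(k < m)%N]ltn_neqAle.
by rewrite andbC.
Qed.

Lemma prod_blkN : \prod_(j < dimn nn) eps (blkn j) = \prod_(k < N'.+1) eps k ^+ nn k.
Proof.
rewrite -(big_mkord xpredT (fun j => eps (blkn j))) -sbN prod_blk //.
by apply: eq_bigl => k; rewrite ltn_ord.
Qed.

End Blocks.

Section Main.
Variable R : realType.

Lemma pcE N' (nn : 'I_N'.+1 -> nat) (eps : 'I_N'.+1 -> R) (u x : 'rV[R]_(dimn nn)) :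
  pc eps (u - x) = (2 ^+ dimn nn * \prod_(i < N'.+1) eps i ^+ nn i)^-1 *
     Ind (fun j : 'I_(dimn nn) => eps (blkn nn j)) x u.
Proof.
rewrite /pc; case: ifP => H.
  rewrite /Ind [X in _ = _ * X]big1 ?mulr1 // => j _; rewrite /ind.
  move/forallP: H => /(_ (blkn nn j)) /forallP /(_ j) /implyP; rewrite !mxE => -> //.
  by rewrite inblkE blknP.
move/negbT: H; rewrite negb_forall => /existsP [i]; rewrite negb_forall => /existsP [j].
rewrite negb_imply => /andP [hin hle].
have hb : blkn nn j = i by apply: blkn_uniq; rewrite -inblkE.
rewrite /Ind (bigD1 j) //= /ind hb; rewrite !mxE in hle.
by rewrite (negbTE hle) mul0r mulr0.
Qed.

Lemma cst_prod N' (nn : 'I_N'.+1 -> nat) (eps : 'I_N'.+1 -> R) : (forall i, 0 < eps i) ->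
  (2 ^+ dimn nn * \prod_(i < N'.+1) eps i ^+ nn i)^-1 *
     \prod_(j < dimn nn) (2 * eps (blkn nn j)) = 1.
Proof.
move=> epos.
rewrite big_split /= prodr_const card_ord prod_blkN mulVf //.
rewrite gt_eqF // mulr_gt0 ?exprn_gt0 //.
by apply: prodr_gt0 => i _; rewrite exprn_gt0.
Qed.

Lemma min_le N' (eps : 'I_N'.+1 -> R) i : min_eps eps <= eps i.
Proof. by rewrite /min_eps (bigD1 i) //= ge_min lexx. Qed.

Lemma min_gt0 N' (eps : 'I_N'.+1 -> R) : (forall i, 0 < eps i) -> 0 < min_eps eps.
Proof.
move=> epos; rewrite /min_eps; elim/big_ind: _ => //.
by move=> a b ha hb; rewrite lt_min ha hb.
Qed.

Lemma cs n (f : 'I_n -> R) :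
  \sum_(j < n) `|f j| <= Num.sqrt (n%:R) * Num.sqrt (\sum_(j < n) f j ^+ 2).
Proof.
set s := \sum_(j < n) `|f j|.
set q := \sum_(j < n) f j ^+ 2.
have s0 : 0 <= s by apply: sumr_ge0 => j _.
have key : s ^+ 2 <= n%:R * q.
  have -> : s ^+ 2 = \sum_(j < n) \sum_(k < n) `|f j| * `|f k|.
    by rewrite expr2 /s mulr_suml; apply: eq_bigr => j _; rewrite mulr_sumr.
  have -> : n%:R * q = \sum_(j < n) \sum_(k < n) (f j ^+ 2 + f k ^+ 2) / 2.
    rewrite (eq_bigr (fun j => (n%:R * f j ^+ 2 + q) / 2)); last first.
      move=> j _; rewrite -mulr_suml big_split /= sumr_const card_ord -/q.
      by rewrite mulr_natl.
    rewrite -mulr_suml big_split /= -mulr_sumr sumr_const card_ord -/q mulr_natl.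
    by field.
  apply: ler_sum => j _; apply: ler_sum => k _.
  rewrite -[f j ^+ 2]real_normK ?num_real // -[f k ^+ 2]real_normK ?num_real //.
  have := sqr_ge0 (`|f j| - `|f k|); lra.
rewrite -sqrtrM ?ler0n // -(ger0_norm s0) -sqrtr_sqr.
by rewrite ler_sqrt // mulr_ge0 ?ler0n // sumr_ge0 // => j _; apply: sqr_ge0.
Qed.

End Main.

Unset Implicit Arguments.

Theorem lemma8 (R : realType) (N' : nat) (nn : 'I_N'.+1 -> nat)
  (eps : 'I_N'.+1 -> R) (x y : 'rV[R]_(dimn nn)) :
  (forall i, (0 < nn i)%N) -> (forall i, 0 < eps i) ->
  (iint (fun u => (`| pc eps (u - x) - pc eps (u - y) |)%:E) <=
    ((Num.sqrt (dimn nn)%:R / min_eps eps) * eucl (x - y))%:E)%E.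
Proof.
move=> nnpos epos.
have c0 : 0 <= (2 ^+ dimn nn * \prod_(i < N'.+1) eps i ^+ nn i)^-1.
  rewrite invr_ge0 mulr_ge0 ?exprn_ge0 //.
  by apply: prodr_ge0 => i _; rewrite exprn_ge0 // ltW.
rewrite (_ : (fun u => _) = (fun u => ((2 ^+ dimn nn * \prod_(i < N'.+1) eps i ^+ nn i)^-1 *
    `|Ind (fun j : 'I_(dimn nn) => eps (blkn nn j)) x u -
      Ind (fun j : 'I_(dimn nn) => eps (blkn nn j)) y u|)%:E)); last first.
  by apply/funext => u; rewrite !pcE -mulrBr normrM (ger0_norm c0).
apply: le_trans (L1 (e := fun j : 'I_(dimn nn) => eps (blkn nn j)) x y c0 (fun j => epos _)) _.
rewrite lee_fin (cst_prod nn epos) mul1r.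
have m0 : 0 < min_eps eps := min_gt0 epos.
apply: (@le_trans _ _ (\sum_(j < dimn nn) `|x ord0 j - y ord0 j| / min_eps eps)).
  apply: ler_sum => j _; apply: ler_wpM2l => //.
  by rewrite lef_pV2 ?posrE ?epos ?min_le.
rewrite -mulr_suml mulrAC; apply: ler_wpM2r; first by rewrite invr_ge0 ltW.
rewrite /eucl [X in _ <= _ * Num.sqrt X](eq_bigr (fun j => (x ord0 j - y ord0 j) ^+ 2)); last first.
  by move=> j _; rewrite !mxE.
exact: (cs (fun j => x ord0 j - y ord0 j)).
Qed.
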